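(* Let $a,b$ be coprime positive integers, $q=a/b$, and let $\mathbf m=(m_0,\dots,m_k)$ and $\mathbf n=(n_0,\dots,n_l)$ be paths for $q$ with $c(q,\mathbf m)=c(q,\mathbf n)$. Write $a\,c(q,\mathbf m_j)=u_j/v_j$ ($j=0,\dots,k-1$) and $a\,c(q,\mathbf n_j)=x_j/y_j$ ($j=0,\dots,l-1$) as reduced fractions, and let $N$ be a positive integer with $u_j\mid N$ for $j=0,\dots,k-1$ and $x_j\mid N$ for $j=0,\dots,l-1$. If $k\ne l$, then $w_{q'}$ is not unique for every $q'=a/b'$ with $b'$ a positive integer such that $b'\equiv\pm b\pmod N$ and $b'\ne\big(w_q(\mathbf m)/w_q(\mathbf n)\big)^{2/(k-l)}b$. If $k=l$ and $w_q(\mathbf m)\ne w_q(\mathbf n)$, then $w_{q'}$ is not unique for every $q'=a/b'$ with $b'$ a positive integer such that $b'\equiv\pm b\pmod N$.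
   Context: For $q>0$, $k\ge0$ and $\mathbf m=(m_0,\dots,m_k)\in\mathbb Z^{k+1}$ put $\mathbf m_j=(m_0,\dots,m_j)$; define $c(q,\mathbf m_0)=m_0$ and $c(q,\mathbf m_j)=m_j+\frac{1}{q\,c(q,\mathbf m_{j-1})}$ for $1\le j\le k$. $\mathbf m$ is a path for $q$ of length $k$ if $c(q,\mathbf m_j)\ne0$ for $0\le j\le k-1$. The weight is $w_q(\mathbf m)=q^{k/2}\prod_{j=0}^{k-1}|c(q,\mathbf m_j)|$ (and $1$ if $k=0$). The weight $w_q$ is unique if $w_q(\mathbf m)=w_q(\mathbf n)$ for all paths $\mathbf m,\mathbf n$ for $q$ with $c(q,\mathbf m)=c(q,\mathbf n)$. *)

(* Defs.v *)
From HB Require Import structures.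
From mathcomp Require Import all_boot all_order all_algebra.
From mathcomp Require Import all_classical all_reals all_analysis.
Set Implicit Arguments. Unset Strict Implicit. Unset Printing Implicit Defensive.
Import Order.TTheory GRing.Theory Num.Theory.
Local Open Scope ring_scope.

(* c(q, (m_0,...,m_j)): c(q,(m0)) = m0 and
   c(q, m_j) = m_j + 1/(q c(q, m_{j-1})). The empty sequence is not a path;
   its value is irrelevant (set to 0). *)
Definition cval (q : rat) (m : seq int) : rat :=
  match m with
  | [::] => 0
  | m0 :: ms => foldl (fun acc x => x%:~R + (q * acc)^-1) (m0%:~R) ms
  end.

Definition len (m : seq int) : nat := (size m).-1.

(* prefix m_j = (m_0,...,m_j) *)
Definition pref (m : seq int) (j : nat) : seq int := take j.+1 m.

Definition is_path (q : rat) (m : seq int) : Prop :=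
  (0 < size m)%N /\ forall j : nat, (j < len m)%N -> cval q (pref m j) != 0.

Definition weight (R : realType) (q : rat) (m : seq int) : R :=
  powR (ratr q) ((len m)%:R / 2) *
  \prod_(j < len m) `|ratr (cval q (pref m j)) : R|.

Definition w_unique (R : realType) (q : rat) : Prop :=
  forall m n : seq int, is_path q m -> is_path q n -> cval q m = cval q n ->
    weight R q m = weight R q n.

(* Main.v *)
Require Import Defs.
From HB Require Import structures.
From mathcomp Require Import all_boot all_order all_algebra.
From mathcomp Require Import all_classical all_reals all_analysis.
From mathcomp Require Import lra ring.
Import Order.TTheory GRing.Theory Num.Theory.
Local Open Scope ring_scope.

Lemma cval_rcons q s x : (0 < size s)%N ->
  cval q (rcons s x) = x%:~R + (q * cval q s)^-1.
Proof. by case: s => // y s _; rewrite /= foldl_rcons. Qed.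

Definition eps (e0 s : int) (j : nat) : int := e0 * s ^+ j.
Definition zz (a N : nat) (q : rat) (m : seq int) (j : nat) : int :=
  let d := a%:Q * cval q (pref m j) in (N%:Z %/ numq d)%Z * denq d.
Definition mtrans (a N : nat) (q : rat) (e0 s t : int) (m : seq int) : seq int :=
  mkseq (fun j => if j is j'.+1 then eps e0 s j * nth 0 m j - eps e0 s j' * t * zz a N q m j'
                  else e0 * nth 0 m 0) (size m).

Lemma alg (A B B' Nn C x z e s t : rat) : A != 0 -> B != 0 -> B' != 0 -> C != 0 ->
  B' = s * B + t * Nn -> z = Nn / (A * C) -> (e = 1 \/ e = -1) -> (s = 1 \/ s = -1) ->
  e * s * x - e * t * z + (A / B' * (e * C))^-1 = e * s * (x + (A / B * C)^-1).
Proof.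
move=> A0 B0 B'0 C0 HB' -> He Hs.
have -> : (A / B' * (e * C))^-1 = B' / (A * e * C).
  have e0 : e != 0 by case: He => ->; rewrite ?oppr_eq0 oner_eq0.
  by field; rewrite e0 A0 C0 B'0.
rewrite HB'; case: He => ->; case: Hs => ->; field; rewrite ?A0 ?C0 ?B0 ?oppr_eq0 ?oner_eq0 //.
Qed.

Lemma zz_val (a N : nat) q m j : a%:Q * cval q (pref m j) != 0 ->
  (numq (a%:Q * cval q (pref m j)) %| N%:Z)%Z ->
  (zz a N q m j)%:~R = N%:Q / (a%:Q * cval q (pref m j)).
Proof.
rewrite /zz; set d := a%:Q * _ => d0 Hdv.
have HN := divzK Hdv.
rewrite -[in RHS](divq_num_den d) -[in RHS]HN !rmorphM /=.
have u0 : (numq d)%:~R != 0 :> rat by rewrite intr_eq0 numq_eq0.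
have v0 : (denq d)%:~R != 0 :> rat by rewrite intr_eq0 denq_neq0.
by field; rewrite u0 v0.
Qed.

Lemma eps_pm e0 s j : (e0 = 1 \/ e0 = -1) -> (s = 1 \/ s = -1) ->
  ((eps e0 s j)%:~R = 1 :> rat) \/ ((eps e0 s j)%:~R = -1 :> rat).
Proof.
move=> He Hs; rewrite /eps rmorphM rmorphXn /=.
have Hs' : (s%:~R : rat) = 1 \/ (s%:~R : rat) = -1 by case: Hs => ->; [left|right].
have: (s%:~R : rat) ^+ j = 1 \/ (s%:~R : rat) ^+ j = -1.
  case: Hs' => ->; first by rewrite expr1n; left.
  by rewrite -signr_odd; case: (odd j); [right|left].
case: He => -> [] ->; rewrite ?mulr1 ?mulN1r ?opprK ?mulrN1.
- by left.
- by right.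
- by right.
- by left.
Qed.

Lemma trans_ok (a b b' N : nat) (e0 s t : int) (m : seq int) :
  (0 < a)%N -> (0 < b)%N -> (0 < b')%N ->
  (e0 = 1 \/ e0 = -1) -> (s = 1 \/ s = -1) -> b'%:Z = s * b%:Z + t * N%:Z ->
  forall j, (j < size m)%N ->
  (forall i, (i < j)%N -> cval (a%:Q / b%:Q) (pref m i) != 0 /\
      (numq (a%:Q * cval (a%:Q / b%:Q) (pref m i)) %| N%:Z)%Z) ->
  cval (a%:Q / b'%:Q) (pref (mtrans a N (a%:Q / b%:Q) e0 s t m) j)
   = (eps e0 s j)%:~R * cval (a%:Q / b%:Q) (pref m j).
Proof.
move=> a0 b0 b'0 He Hs Hb'.
set q := a%:Q / b%:Q; set m' := mtrans _ _ _ _ _ _ _.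
have Hsz : size m' = size m by rewrite size_mkseq.
elim=> [|j IH] Hj Hi.
  rewrite /pref.
  rewrite (take_nth 0) ?Hsz // (take_nth 0) //= nth_mkseq //= /eps expr0 mulr1.
  by rewrite !take0 /= rmorphM.
have Hj' : (j < size m)%N by apply: ltnW.
rewrite /pref (@take_nth _ 0 j.+1 m') ?Hsz // (@take_nth _ 0 j.+1 m) //.
rewrite cval_rcons; last by rewrite size_take Hsz Hj.
rewrite cval_rcons; last by rewrite size_take Hj.
rewrite -/(pref m' j) -/(pref m j) IH //; last by move=> i Hij; apply: Hi; apply: ltnW.
rewrite nth_mkseq //.
have [C0 Hdv] := Hi j (ltnSn j).
have aC0 : a%:Q * cval q (pref m j) != 0 by rewrite mulf_neq0 // intr_eq0 -lt0n.
have Hz := @zz_val a N q m j aC0 Hdv.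
have -> : eps e0 s j.+1 = eps e0 s j * s by rewrite /eps exprSr mulrA.
have HE := @eps_pm e0 s j He Hs.
set E := eps e0 s j in HE *. set Z := zz a N q m j in Hz *. clearbody E Z.
rewrite !(rmorphB, rmorphM) /=.
apply: alg.
- by rewrite intr_eq0 -lt0n.
- by rewrite intr_eq0 -lt0n.
- by rewrite intr_eq0 -lt0n.
- exact: C0.
- by rewrite Hb' rmorphD !rmorphM.
- exact: Hz.
- exact: HE.
- by case: Hs => ->; [left|right]; rewrite ?rmorphN.
Qed.

Lemma main_trans (R : realType) (a b b' N : nat) (e0 s t : int) (m : seq int) :
  (0 < a)%N -> (0 < b)%N -> (0 < b')%N ->
  (e0 = 1 \/ e0 = -1) -> (s = 1 \/ s = -1) -> b'%:Z = s * b%:Z + t * N%:Z ->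
  is_path (a%:Q / b%:Q) m ->
  (forall j : nat, (j < len m)%N ->
     (numq (a%:Q * cval (a%:Q / b%:Q) (pref m j)) %| N%:Z)%Z) ->
  let m' := mtrans a N (a%:Q / b%:Q) e0 s t m in
  [/\ is_path (a%:Q / b'%:Q) m',
      cval (a%:Q / b'%:Q) m' = (eps e0 s (len m))%:~R * cval (a%:Q / b%:Q) m &
      weight R (a%:Q / b'%:Q) m' = powR (ratr (a%:Q / b'%:Q)) ((len m)%:R / 2) *
         \prod_(j < len m) `|ratr (cval (a%:Q / b%:Q) (pref m j)) : R| ].
Proof.
move=> a0 b0 b'0 He Hs Hb' [Hsz Hp] Hdv m'.
have Hsz' : size m' = size m by rewrite size_mkseq.
have Hlen : len m' = len m by rewrite /len Hsz'.
have Hlt : (len m < size m)%N by rewrite /len prednK.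
have Hi : forall j, (j <= len m)%N -> forall i, (i < j)%N ->
    cval (a%:Q / b%:Q) (pref m i) != 0 /\
      (numq (a%:Q * cval (a%:Q / b%:Q) (pref m i)) %| N%:Z)%Z.
  move=> j Hj i Hij; have Hi' : (i < len m)%N by apply: leq_trans Hj.
  by split; [apply: Hp | apply: Hdv].
have Key : forall j, (j <= len m)%N ->
    cval (a%:Q / b'%:Q) (pref m' j) = (eps e0 s j)%:~R * cval (a%:Q / b%:Q) (pref m j).
  move=> j Hj; apply: trans_ok => //; first by apply: leq_ltn_trans Hlt.
  exact: Hi.
have Hpm : forall s0 : seq int, (0 < size s0)%N -> pref s0 (len s0) = s0.
  by move=> s0 H0; rewrite /pref /len prednK // take_size.
have ne : forall j, ((eps e0 s j)%:~R : rat) != 0.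
  by move=> j; case: (@eps_pm e0 s j He Hs) => ->; rewrite ?oppr_eq0 oner_eq0.
split.
- split; first by rewrite Hsz'.
  move=> j; rewrite Hlen => Hj; rewrite Key; last exact: ltnW.
  by rewrite mulf_neq0 // Hp.
- by rewrite -{1}(Hpm m'); [rewrite Hlen Key // Hpm | rewrite Hsz'].
- rewrite /weight Hlen; congr (_ * _); apply: eq_bigr => j _.
  rewrite Key; last exact: ltnW.
  rewrite rmorphM normrM /= ratr_int.
  suff -> : `|(eps e0 s j)%:~R : R| = 1 by rewrite mul1r.
  case: (@eps_pm e0 s j He Hs) => /(congr1 (@ratr R)); rewrite ratr_int => ->;
    by rewrite ?rmorphN rmorph1 ?normrN normr1.
Qed.

Lemma real_neq (R : realType) (x Wm Wn K L : R) : 0 < x -> 0 < Wn -> K != L ->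
  powR x (K / 2) * Wm = powR x (L / 2) * Wn ->
  powR (Wm / Wn) (2 / (K - L)) = x^-1.
Proof.
move=> x0 Wn0 KL H.
have p0 : powR x (K / 2) != 0 by rewrite gt_eqF // powR_gt0.
have -> : Wm / Wn = powR x (L / 2 - K / 2).
  rewrite powRB; last by apply/implyP => _; rewrite gt_eqF.
  have Wn1 : Wn != 0 by rewrite gt_eqF.
  apply/eqP; rewrite (eqr_div _ _ Wn1 p0); apply/eqP.
  by rewrite mulrC H mulrC.
rewrite -powRrM.
have -> : (L / 2 - K / 2) * (2 / (K - L)) = -1.
  have KL0 : K - L != 0 by rewrite subr_eq0.
  by field; rewrite KL0.
by rewrite powR_inv1 // ltW.
Qed.

Lemma obtain_st (b b' N : nat) :
  ((b'%:Z == b%:Z %[mod N%:Z])%Z \/ (b'%:Z == - b%:Z %[mod N%:Z])%Z) ->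
  exists s t : int, (s = 1 \/ s = -1) /\ b'%:Z = s * b%:Z + t * N%:Z.
Proof.
case; rewrite eqz_mod_dvd => /dvdzP [t Ht].
- exists 1, t; split; first by left.
  by rewrite mul1r -Ht addrC subrK.
- exists (-1), t; split; first by right.
  by rewrite -Ht opprK mulN1r addrC addrK.
Qed.

Lemma sign_pow (s : int) k : (s = 1 \/ s = -1) -> (s ^+ k = 1 \/ s ^+ k = -1).
Proof.
case=> ->; first by rewrite expr1n; left.
by rewrite -signr_odd; case: (odd k); [right|left].
Qed.

Lemma eps_self (s : int) k : (s = 1 \/ s = -1) -> eps (s ^+ k) s k = 1.
Proof.
by move=> Hs; rewrite /eps -exprMn; case: Hs => ->; rewrite ?mulrNN mulr1 expr1n.
Qed.

Lemma weight_pos (R : realType) q m : 0 < q -> is_path q m -> 0 < weight R q m.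
Proof.
move=> q0 [_ Hp]; rewrite /weight mulr_gt0 //.
  by rewrite powR_gt0 // ltr0q.
rewrite prodr_gt0 // => j _; rewrite normr_gt0 fmorph_eq0; exact: Hp.
Qed.

Lemma core (R : realType) (a b N : nat) (m n : seq int) b' :
  (0 < a)%N -> (0 < b)%N ->
  is_path (a%:Q / b%:Q) m -> is_path (a%:Q / b%:Q) n ->
  cval (a%:Q / b%:Q) m = cval (a%:Q / b%:Q) n ->
  (forall j : nat, (j < len m)%N ->
     (numq (a%:Q * cval (a%:Q / b%:Q) (pref m j)) %| N%:Z)%Z) ->
  (forall j : nat, (j < len n)%N ->
     (numq (a%:Q * cval (a%:Q / b%:Q) (pref n j)) %| N%:Z)%Z) ->
  (0 < b')%N ->
  ((b'%:Z == b%:Z %[mod N%:Z])%Z \/ (b'%:Z == - b%:Z %[mod N%:Z])%Z) ->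
  w_unique R (a%:Q / b'%:Q) ->
  let x : R := b%:R / b'%:R in
  powR x ((len m)%:R / 2) * weight R (a%:Q / b%:Q) m =
  powR x ((len n)%:R / 2) * weight R (a%:Q / b%:Q) n.
Proof.
move=> a0 b0 Pm Pn Ceq Dm Dn b'0 Hmod Hu x.
have [s [t [Hs Hb']]] := @obtain_st b b' N Hmod.
have [Pm' Cm' Wm'] := @main_trans R a b b' N _ s t m a0 b0 b'0 (@sign_pow s (len m) Hs) Hs Hb' Pm Dm.
have [Pn' Cn' Wn'] := @main_trans R a b b' N _ s t n a0 b0 b'0 (@sign_pow s (len n) Hs) Hs Hb' Pn Dn.
have := Hu _ _ Pm' Pn'.
rewrite Cm' Cn' !eps_self // Ceq => /(_ erefl).
rewrite Wm' Wn'.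
have -> : ratr (a%:Q / b'%:Q) = ratr (a%:Q / b%:Q) * x :> R.
  rewrite /x -(ratr_nat R b) -(ratr_nat R b') -!fmorph_div -rmorphM /=.
  congr ratr.
  have bb : b%:Q != 0 by rewrite intr_eq0 -lt0n.
  have bb' : b'%:Q != 0 by rewrite intr_eq0 -lt0n.
  rewrite -!pmulrn. field. by rewrite bb bb'.
have r0 : 0 <= ratr (a%:Q / b%:Q) :> R.
  by rewrite ltW // ltr0q divr_gt0 // ltr0z ltz_nat.
have x0 : 0 <= x by rewrite /x divr_ge0.
rewrite (powRM ((len m)%:R / 2) r0 x0) (powRM ((len n)%:R / 2) r0 x0) /weight.
have E : forall A X P : R, A * X * P = X * (A * P) by move=> *; ring.
by rewrite !E.
Qed.

Theorem corollary6 (R : realType) (a b N : nat) (m n : seq int) :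
  (0 < a)%N -> (0 < b)%N -> coprime a b -> (0 < N)%N ->
  is_path (a%:Q / b%:Q) m -> is_path (a%:Q / b%:Q) n ->
  cval (a%:Q / b%:Q) m = cval (a%:Q / b%:Q) n ->
  (forall j : nat, (j < len m)%N ->
     (numq (a%:Q * cval (a%:Q / b%:Q) (pref m j)) %| N%:Z)%Z) ->
  (forall j : nat, (j < len n)%N ->
     (numq (a%:Q * cval (a%:Q / b%:Q) (pref n j)) %| N%:Z)%Z) ->
  (len m <> len n ->
    forall b' : nat, (0 < b')%N ->
      ((b'%:Z == b%:Z %[mod N%:Z])%Z \/ (b'%:Z == - b%:Z %[mod N%:Z])%Z) ->
      (b'%:R : R) != powR (weight R (a%:Q / b%:Q) m / weight R (a%:Q / b%:Q) n)
                          (2 / ((len m)%:R - (len n)%:R)) * b%:R ->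
      ~ w_unique R (a%:Q / b'%:Q))
  /\
  (len m = len n -> weight R (a%:Q / b%:Q) m != weight R (a%:Q / b%:Q) n ->
    forall b' : nat, (0 < b')%N ->
      ((b'%:Z == b%:Z %[mod N%:Z])%Z \/ (b'%:Z == - b%:Z %[mod N%:Z])%Z) ->
      ~ w_unique R (a%:Q / b'%:Q)).
Proof.
move=> a0 b0 _ _ Pm Pn Ceq Dm Dn.
have q0 : 0 < a%:Q / b%:Q by rewrite divr_gt0 // ltr0z ltz_nat.
have Wn0 := @weight_pos R _ n q0 Pn.
split.
- move=> Hkl b' b'0 Hmod Hne Hu.
  have H := @core R a b N m n b' a0 b0 Pm Pn Ceq Dm Dn b'0 Hmod Hu.
  have x0 : 0 < (b%:R / b'%:R : R) by rewrite divr_gt0 // ltr0n.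
  have KL : (len m)%:R != (len n)%:R :> R by rewrite eqr_nat; apply/eqP.
  have := @real_neq R _ _ _ _ _ x0 Wn0 KL H.
  move=> E; move/eqP: Hne; apply; rewrite E invf_div.
  have bb : b%:R != 0 :> R by rewrite pnatr_eq0 -lt0n.
  by rewrite divfK.
- move=> Hkl Hne b' b'0 Hmod Hu.
  have H := @core R a b N m n b' a0 b0 Pm Pn Ceq Dm Dn b'0 Hmod Hu.
  move: H; rewrite /= Hkl => /mulfI H; move/eqP: Hne; apply; apply: H.
  by rewrite gt_eqF // powR_gt0 // divr_gt0 // ltr0n.
Qed.
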